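(* For every regular language $L\subseteq\Sigma^*$, the nondeterministic state complexity $\mathrm{ns}(L)$ equals the least degree of any boolean representation of the free monoid $\Sigma^*$ that extends the canonical representation $\kappa_L\circ\mu_L\colon\Sigma^*\to\mathbf{JSL}(\mathrm{LQ}(L),\mathrm{LQ}(L))$, $w\mapsto(K\mapsto w^{-1}K)$.
   Context: $\mathrm{LQ}(L)$ is the finite semilattice (under $\subseteq$, join $=\cup$) of all finite unions, including $\emptyset$, of left derivatives $u^{-1}L=\{w:uw\in L\}$. For a finite semilattice $S$, $\mathbf{JSL}(S,S)$ is the set of join-preserving maps $S\to S$, a monoid under $f\cdot g:=g\circ f$. A boolean representation of a monoid $M$ is a finite semilattice $S$ with a monoid morphism $\rho\colon M\to\mathbf{JSL}(S,S)$; its degree is $|J(S)|$, the number of join-irreducible elements of $S$ ($j\ne\bot$ with $j=\bigvee X\Rightarrow j\in X$). An equivariant map $\rho_1\to\rho_2$ between representations on $S_1,S_2$ is a join-preserving $f\colon S_1\to S_2$ with $f(\rho_1(m)(s))=\rho_2(m)(f(s))$ for all $m,s$; $\rho_2$ extends $\rho_1$ if there is an injective equivariant map $\rho_1\to\rho_2$. $\mathrm{ns}(L)$ is the least number of states of an nfa (finite state set, transition relations, sets of initial and final states; several initial states allowed) accepting $L$. *)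

(* Defs.v *)
From HB Require Import structures.
From mathcomp Require Import all_boot all_order.
Set Implicit Arguments. Unset Strict Implicit. Unset Printing Implicit Defensive.
Import Order.Theory.
Local Open Scope order_scope.

Definition lang (Sigma : Type) := seq Sigma -> bool.

Definition lquot (Sigma : Type) (u : seq Sigma) (K : lang Sigma) : lang Sigma :=
  fun w => K (u ++ w).

Definition lang0 (Sigma : Type) : lang Sigma := fun _ => false.
Definition langU (Sigma : Type) (K K' : lang Sigma) : lang Sigma :=
  fun w => K w || K' w.

Definition union_lquots (Sigma : Type) (L : lang Sigma) (us : seq (seq Sigma))
  : lang Sigma := fun w => has (fun u => L (u ++ w)) us.

(** Membership in LQ(L): finite unions (including the empty one) of left
    derivatives of L. *)
Definition inLQ (Sigma : Type) (L : lang Sigma) (K : lang Sigma) : Prop :=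
  exists us : seq (seq Sigma), K = union_lquots L us.

Record dfa (Sigma Q : finType) := Dfa {
  dfa_init : Q;
  dfa_trans : Q -> Sigma -> Q;
  dfa_final : pred Q }.

Definition dfa_accept (Sigma Q : finType) (A : dfa Sigma Q) : lang Sigma :=
  fun w => dfa_final A (foldl (dfa_trans A) (dfa_init A) w).

Definition regular (Sigma : finType) (L : lang Sigma) : Prop :=
  exists (Q : finType) (A : dfa Sigma Q), dfa_accept A =1 L.

Record nfa (Sigma Q : finType) := Nfa {
  nfa_init : pred Q;
  nfa_trans : Q -> Sigma -> Q -> bool;
  nfa_final : pred Q }.

Definition nfa_step (Sigma Q : finType) (A : nfa Sigma Q) (X : {set Q}) (a : Sigma)
  : {set Q} := [set q' | [exists q in X, nfa_trans A q a q']].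

Definition nfa_accept (Sigma Q : finType) (A : nfa Sigma Q) : lang Sigma :=
  fun w => [exists q in foldl (nfa_step A) [set q | nfa_init A q] w, nfa_final A q].

Definition is_ns (Sigma : finType) (L : lang Sigma) (n : nat) : Prop :=
  (exists (Q : finType) (A : nfa Sigma Q), nfa_accept A =1 L /\ #|Q| = n) /\
  (forall (Q : finType) (A : nfa Sigma Q), nfa_accept A =1 L -> n <= #|Q|).

(** Finite semilattices: a finite join-semilattice with bottom (finite joins,
    including the empty one) is the same thing as a nonempty finite lattice. *)

Definition join_preserving (d : Order.disp_t) (S : finTBLatticeType d)
  (g : S -> S) : Prop :=
  g \bot = \bot /\ forall x y, g (x `|` y) = g x `|` g y.

(** Boolean representation of the free monoid Sigma^*: a monoid morphism
    rho : Sigma^* -> JSL(S,S), where JSL(S,S) has product f . g := g o f. *)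
Definition bool_rep (Sigma : finType) (d : Order.disp_t) (S : finTBLatticeType d)
  (rho : seq Sigma -> S -> S) : Prop :=
  [/\ forall w, join_preserving (rho w),
      forall x, rho [::] x = x &
      forall u v x, rho (u ++ v) x = rho v (rho u x)].

Definition join_irr (d : Order.disp_t) (S : finTBLatticeType d) (j : S) : bool :=
  (j != \bot) && [forall X : {set S}, (j == \join_(x in X) x) ==> (j \in X)].

Definition degree (d : Order.disp_t) (S : finTBLatticeType d) : nat :=
  #|[set j : S | join_irr j]|.

(** rho extends the canonical representation kappa_L o mu_L on LQ(L)
    (w |-> (K |-> w^{-1} K)): there is an injective, join-preserving,
    equivariant map LQ(L) -> S. *)
Definition extends_canonical (Sigma : finType) (L : lang Sigma)
  (d : Order.disp_t) (S : finTBLatticeType d) (rho : seq Sigma -> S -> S) : Prop :=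
  exists f : lang Sigma -> S,
    [/\ f (@lang0 Sigma) = \bot,
        forall K K', inLQ L K -> inLQ L K' -> f (langU K K') = f K `|` f K',
        forall K K', inLQ L K -> inLQ L K' -> f K = f K' -> K = K' &
        forall w K, inLQ L K -> f (lquot w K) = rho w (f K)].

Definition is_min_ext_degree (Sigma : finType) (L : lang Sigma) (n : nat) : Prop :=
  (exists (d : Order.disp_t) (S : finTBLatticeType d) (rho : seq Sigma -> S -> S),
      [/\ bool_rep rho, extends_canonical L rho & degree S = n]) /\
  (forall (d : Order.disp_t) (S : finTBLatticeType d) (rho : seq Sigma -> S -> S),
      bool_rep rho -> extends_canonical L rho -> n <= degree S).

(* Main.v *)
Require Import Defs.
From HB Require Import structures.
From mathcomp Require Import all_boot all_order.
From Stdlib Require Import ClassicalEpsilon FunctionalExtensionality.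
Set Implicit Arguments. Unset Strict Implicit. Unset Printing Implicit Defensive.
Import Order.Theory.

Definition pb (P : Prop) : bool := if excluded_middle_informative P then true else false.
Lemma pbP (P : Prop) : reflect P (pb P).
Proof. rewrite /pb; case: excluded_middle_informative => h; by constructor. Qed.
Lemma pb_ext (P P' : Prop) : (P <-> P') -> pb P = pb P'.
Proof. move=> h; apply/pbP/pbP; tauto. Qed.

Section Cons.
Variables (Sigma Q : finType) (A : nfa Sigma Q).
Definition LX (X : {set Q}) : lang Sigma :=
  fun w => [exists q in foldl (nfa_step A) X w, nfa_final A q].
Definition cl (X : {set Q}) : {set Q} :=
  [set q | pb (forall w, LX [set q] w -> LX X w)].

Lemma mem_fold w : forall X q', (q' \in foldl (nfa_step A) X w) =
   [exists q in X, q' \in foldl (nfa_step A) [set q] w].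
Proof.
elim: w => [|a w IH] X q' /=.
  apply/idP/existsP => [h|[q /andP[qX /set1P ->]]]//.
  by exists q'; rewrite h set11.
rewrite IH; apply/existsP/existsP => [[p /andP[]]|[q /andP[qX]]].
  rewrite inE => /existsP[q /andP[qX tq]] hp; exists q; rewrite qX /= IH.
  by apply/existsP; exists p; rewrite hp inE andbT; apply/existsP; exists q; rewrite set11.
rewrite IH => /existsP[p /andP[]]; rewrite inE => /existsP[q0 /andP[/set1P -> tq]] hp.
by exists p; rewrite hp andbT inE; apply/existsP; exists q; rewrite qX.
Qed.

Lemma LX_ex (X : {set Q}) w : LX X w = [exists q in X, LX [set q] w].
Proof.
apply/existsP/existsP => [[q' /andP[]]|[q /andP[qX /existsP[q' /andP[h1 h2]]]]].
  rewrite mem_fold => /existsP[q /andP[qX h]] f; exists q; rewrite qX; apply/existsP.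
  by exists q'; rewrite h.
by exists q'; rewrite h2 mem_fold andbT; apply/existsP; exists q; rewrite qX.
Qed.

Lemma LX_sub (X Y : {set Q}) w : X \subset Y -> LX X w -> LX Y w.
Proof.
move=> /subsetP s; rewrite !(LX_ex _ w) => /existsP[q /andP[qX h]].
by apply/existsP; exists q; rewrite s.
Qed.

Lemma LX_U (X : {set Q}) Y w : LX (X :|: Y) w = LX X w || LX Y w.
Proof.
rewrite !(LX_ex _ w); apply/existsP/orP => [[q /andP[]]|[] /existsP[q /andP[qX h]]].
  by rewrite inE => /orP[] h1 h2; [left|right]; apply/existsP; exists q; rewrite h1.
  by exists q; rewrite inE qX.
by exists q; rewrite inE qX orbT.
Qed.

Lemma LX0 w : LX set0 w = false.
Proof. by rewrite LX_ex; apply/existsP => -[q]; rewrite inE. Qed.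

Lemma LX_fold (X : {set Q}) u w : LX (foldl (nfa_step A) X u) w = LX X (u ++ w).
Proof. by rewrite /LX foldl_cat. Qed.

Lemma sub_cl (X : {set Q}) : X \subset cl X.
Proof.
apply/subsetP => q qX; rewrite inE; apply/pbP => w; apply: LX_sub.
by rewrite sub1set.
Qed.

Lemma LX_cl (X : {set Q}) w : LX (cl X) w = LX X w.
Proof.
apply/idP/idP; last exact: LX_sub (sub_cl X).
rewrite LX_ex => /existsP[q /andP[]]; rewrite inE => /pbP; apply.
Qed.

Lemma cl_ext (X : {set Q}) Y : (forall w, LX X w = LX Y w) -> cl X = cl Y.
Proof.
move=> h; apply/setP => q; rewrite !inE; apply: pb_ext; split=> H w /H; by rewrite h.
Qed.

Lemma clK (X : {set Q}) : cl (cl X) = cl X.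
Proof. by apply: cl_ext => w; rewrite LX_cl. Qed.

Lemma cl_mono (X Y : {set Q}) : X \subset Y -> cl X \subset cl Y.
Proof.
move=> s; apply/subsetP => q; rewrite !inE => /pbP h; apply/pbP => w /h.
exact: LX_sub.
Qed.

Record CS := MkCS { csval : {set Q}; csP : cl csval == csval }.
HB.instance Definition _ := [isSub for csval].
HB.instance Definition _ := [Finite of CS by <:].

Fact cs_display : Order.disp_t. Proof. exact: Order.Disp tt tt. Qed.

Definition csle (x y : CS) := csval x \subset csval y.
Lemma csle_refl : reflexive csle. Proof. by move=> x; exact: subxx. Qed.
Lemma csle_anti : antisymmetric csle.
Proof. by move=> x y /andP[a b]; apply: val_inj; apply/eqP; rewrite eqEsubset; exact/andP. Qed.
Lemma csle_trans : transitive csle.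
Proof. by move=> y x z; exact: subset_trans. Qed.
HB.instance Definition _ := Order.Le_isPOrder.Build cs_display CS csle_refl csle_anti csle_trans.

Lemma clP (x : CS) : cl (csval x) = csval x.
Proof. exact/eqP/csP. Qed.

Lemma cl_closed (X : {set Q}) : cl (cl X) == cl X. Proof. by rewrite clK. Qed.
Definition mkcl X : CS := MkCS (cl_closed X).

Lemma cl_meet (x y : CS) : cl (csval x :&: csval y) == csval x :&: csval y.
Proof.
rewrite eqEsubset sub_cl andbT subsetI.
by apply/andP; split; [rewrite -{2}(clP x)|rewrite -{2}(clP y)]; apply: cl_mono; [exact: subsetIl|exact: subsetIr].
Qed.
Definition csmeet (x y : CS) : CS := MkCS (cl_meet x y).
Definition csjoin (x y : CS) : CS := mkcl (csval x :|: csval y).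

Lemma csmeetP (x y z : CS) : (x <= csmeet y z)%O = (x <= y)%O && (x <= z)%O.
Proof. by rewrite /Order.le /= /csle /= subsetI. Qed.
Lemma csjoinP (x y z : CS) : (csjoin x y <= z)%O = (x <= z)%O && (y <= z)%O.
Proof.
rewrite /Order.le /= /csle /= -subUset; apply/idP/idP => h.
  exact: subset_trans (sub_cl _) h.
by rewrite -(clP z) cl_mono.
Qed.
HB.instance Definition _ := Order.POrder_MeetJoin_isLattice.Build cs_display CS csmeetP csjoinP.

Definition csbot : CS := mkcl set0.
Lemma csbotP (x : CS) : (csbot <= x)%O.
Proof. by rewrite /Order.le /= /csle /= -(clP x) cl_mono ?sub0set. Qed.
HB.instance Definition _ := Order.hasBottom.Build cs_display CS csbotP.
Lemma cl_top : cl setT == setT. Proof. by rewrite eqEsubset subsetT sub_cl. Qed.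
Definition cstop : CS := MkCS cl_top.
Lemma cstopP (x : CS) : (x <= cstop)%O.
Proof. exact: subsetT. Qed.
HB.instance Definition _ := Order.hasTop.Build cs_display CS cstopP.

Definition rho (w : seq Sigma) (x : CS) : CS := mkcl (foldl (nfa_step A) (csval x) w).

Lemma cs_eq (x y : CS) : (forall w, LX (csval x) w = LX (csval y) w) -> x = y.
Proof. by move=> h; apply: val_inj => /=; rewrite -(clP x) -(clP y); apply: cl_ext. Qed.

Lemma LX_join (x y : CS) w : LX (csval (x `|` y)%O) w = LX (csval x) w || LX (csval y) w.
Proof. by rewrite /= LX_cl LX_U. Qed.
Lemma LX_bot w : LX (csval (\bot : CS)%O) w = false.
Proof. by rewrite /= LX_cl LX0. Qed.
Lemma LX_rho u (x : CS) w : LX (csval (rho u x)) w = LX (csval x) (u ++ w).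
Proof. by rewrite /= LX_cl LX_fold. Qed.

Lemma rho_rep : bool_rep rho.
Proof.
split.
- move=> w; split.
    by apply: cs_eq => w'; rewrite LX_rho !LX_bot.
  by move=> x y; apply: cs_eq => w'; rewrite LX_rho !LX_join !LX_rho.
- by move=> x; apply: cs_eq => w'; rewrite LX_rho.
- by move=> u v x; apply: cs_eq => w'; rewrite !LX_rho catA.
Qed.

Definition FK (K : lang Sigma) : {set Q} := [set q | pb (forall w, LX [set q] w -> K w)].
Definition fK (K : lang Sigma) : CS := mkcl (FK K).

Lemma LX_f (K : lang Sigma) (Y : {set Q}) :
  (forall w, K w = LX Y w) -> forall w, LX (csval (fK K)) w = K w.
Proof.
move=> hK w; rewrite /= LX_cl; apply/idP/idP.
  rewrite LX_ex => /existsP[q /andP[]]; rewrite inE => /pbP; apply.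
rewrite hK; apply: LX_sub; apply/subsetP => q qY; rewrite inE; apply/pbP => w' h.
by rewrite hK; apply: LX_sub h; rewrite sub1set.
Qed.

Variable L : lang Sigma.
Hypothesis hA : nfa_accept A =1 L.

Lemma LQ_LX K : inLQ L K -> exists Y, forall w, K w = LX Y w.
Proof.
case=> us ->; exists (\bigcup_(u <- us) foldl (nfa_step A) [set q | nfa_init A q] u).
move=> w; rewrite /union_lquots; elim: us => [|u us IH]; first by rewrite big_nil LX0.
by rewrite big_cons LX_U /= IH LX_fold -hA.
Qed.

Lemma fK_ext : extends_canonical L rho.
Proof.
exists fK; split.
- apply: cs_eq => w; rewrite LX_bot (@LX_f _ set0) // => w'; by rewrite LX0.
- move=> K K' /LQ_LX[Y hY] /LQ_LX[Y' hY']; apply: cs_eq => w.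
  rewrite LX_join (@LX_f _ (Y :|: Y')) ?(LX_f hY) ?(LX_f hY') //.
  by move=> w'; rewrite LX_U /langU hY hY'.
- move=> K K' /LQ_LX[Y hY] /LQ_LX[Y' hY'] e; apply: functional_extensionality => w.
  by rewrite -(LX_f hY) -(LX_f hY') e.
- move=> w K /LQ_LX[Y hY]; apply: cs_eq => w'.
  rewrite LX_rho (LX_f hY) (@LX_f _ (foldl (nfa_step A) Y w)) //.
  by move=> w''; rewrite LX_fold /lquot hY.
Qed.

Lemma LX_joins (s : seq CS) w :
  LX (csval (\join_(x <- s) x)%O) w = has (fun x => LX (csval x) w) s.
Proof.
elim: s => [|x s IH]; first by rewrite big_nil LX_bot.
by rewrite big_cons LX_join IH.
Qed.

Definition c1 (q : Q) : CS := mkcl [set q].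

Lemma irr_c1 (j : CS) : join_irr j -> j \in [set c1 q | q in [set: Q]].
Proof.
case/andP=> _ /forallP /(_ [set c1 q | q in csval j]) /implyP H.
have e : j = (\join_(x in [set c1 q | q in csval j]) x)%O.
  apply: cs_eq => w; rewrite -big_filter LX_joins LX_ex.
  apply/existsP/hasP => [[q /andP[qj h]]|[x]].
    exists (c1 q); last by rewrite /= LX_cl.
    by rewrite mem_filter mem_index_enum andbT imset_f.
  rewrite mem_filter mem_index_enum andbT => /imsetP[q qj ->]; rewrite /= LX_cl => h.
  by exists q; rewrite qj.
have /imsetP[q _ ->] := H (introT eqP e).
by apply: imset_f; rewrite inE.
Qed.

Lemma degree_CS : degree CS <= #|Q|.
Proof.
rewrite /degree -cardsT; apply: leq_trans (leq_imset_card c1 _).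
by apply: subset_leq_card; apply/subsetP => j; rewrite inE => /irr_c1.
Qed.
End Cons.

Lemma join_decomp d (S : finTBLatticeType d) (s : S) :
  s = (\join_(j | join_irr j && (j <= s)%O) j)%O.
Proof.
suff H : forall n (s : S), #|[set y : S | (y < s)%O]| < n ->
   s = (\join_(j | join_irr j && (j <= s)%O) j)%O by apply: (H _ s (ltnSn _)).
elim=> // n IH {}s hs.
apply/eqP; rewrite eq_le; apply/andP; split; last by apply/joinsP => j /andP[].
case: (eqVneq s \bot%O) => [->|sb]; first by rewrite le0x.
case: (boolP (join_irr s)) => [irr|].
  by apply: (@joins_sup _ _ _ _ _ id); rewrite irr lexx.
rewrite /join_irr sb /= negb_forall => /existsP[X]; rewrite negb_imply => /andP[/eqP sX sNX].
rewrite [X in (X <= _)%O]sX; apply/joinsP => x xX.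
have xs : (x <= s)%O by rewrite sX; apply: (@joins_sup _ _ _ _ _ id).
have xlt : (x < s)%O.
  by rewrite lt_neqAle xs andbT; apply: contraNneq sNX => <-.
have hx : #|[set y : S | (y < x)%O]| < n.
  move: hs; rewrite ltnS; apply: leq_trans; apply: proper_card; apply/properP; split.
    by apply/subsetP => y; rewrite !inE => /lt_trans; apply.
  by exists x; rewrite !inE ?ltxx.
rewrite [X in (X <= _)%O](IH x hx); apply/joinsP => j /andP[ji jx].
by apply: (@joins_sup _ _ _ j _ id); apply/andP; split; [exact: ji|exact: le_trans jx xs].
Qed.

Section LB.
Variables (Sigma : finType) (L : lang Sigma) (d : Order.disp_t) (S : finTBLatticeType d)
  (rho : seq Sigma -> S -> S) (f : lang Sigma -> S).
Hypothesis hrep : bool_rep rho.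
Hypotheses (f0 : f (@lang0 Sigma) = \bot%O)
  (fU : forall K K', inLQ L K -> inLQ L K' -> f (langU K K') = (f K `|` f K')%O)
  (finj : forall K K', inLQ L K -> inLQ L K' -> f K = f K' -> K = K')
  (feq : forall w K, inLQ L K -> f (lquot w K) = rho w (f K)).

Lemma inLQ_U K K' : inLQ L K -> inLQ L K' -> inLQ L (langU K K').
Proof.
case=> us -> [us' ->]; exists (us ++ us'); apply: functional_extensionality => w.
by rewrite /langU /union_lquots has_cat.
Qed.
Lemma inLQ_0 : inLQ L (@lang0 Sigma). Proof. by exists [::]. Qed.
Lemma inLQ_q w : inLQ L (lquot w L).
Proof. by exists [:: w]; apply: functional_extensionality => x; rewrite /union_lquots /= orbF. Qed.
Lemma inLQ_L : inLQ L L.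
Proof. by exists [:: [::]]; apply: functional_extensionality => x; rewrite /union_lquots /= orbF. Qed.

Definition nf (s : S) : bool := pb (exists K, [/\ inLQ L K, K [::] = false & (s <= f K)%O]).

Lemma nf_bot : nf \bot%O.
Proof. by apply/pbP; exists (@lang0 Sigma); split; [exact: inLQ_0| |rewrite f0]. Qed.

Lemma nf_join x y : nf (x `|` y)%O = nf x && nf y.
Proof.
apply/pbP/andP => [[K [hK e h]]|[/pbP[K [hK e h]] /pbP[K' [hK' e' h']]]].
  move: h; rewrite leUx => /andP[h1 h2]; split; apply/pbP; by exists K.
exists (langU K K'); split; first exact: inLQ_U.
  by rewrite /langU e e'.
by rewrite fU // leU2.
Qed.

Lemma nf_f K : inLQ L K -> nf (f K) = ~~ K [::].
Proof.
move=> hK; apply/pbP/idP => [[K' [hK' e h]]|].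
  have := finj (inLQ_U hK hK') hK'; rewrite fU // (join_r h) => /(_ erefl) e2.
  by move: e; rewrite -e2 /langU; case: (K [::]).
by move=> /negbTE e; exists K; split.
Qed.

Lemma nf_joins (I : finType) (P : pred I) (F : I -> S) :
  nf (\join_(i | P i) F i)%O = [forall (i | P i), nf (F i)].
Proof.
rewrite -big_andE; apply: (big_morph nf (op1 := andb) (id1 := true)) => //.
  exact: nf_join.
exact: nf_bot.
Qed.

Lemma rho_joins w (I : finType) (P : pred I) (F : I -> S) :
  rho w (\join_(i | P i) F i)%O = (\join_(i | P i) rho w (F i))%O.
Proof.
case: hrep => /(_ w) [h0 hU] _ _.
by apply: (big_morph (rho w) (op1 := Order.join) (id1 := \bot%O)).
Qed.

Lemma fin_decomp w (s : S) :
  ~~ nf (rho w s) = [exists j, [&& join_irr j, (j <= s)%O & ~~ nf (rho w j)]].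
Proof.
rewrite {1}(join_decomp s) rho_joins nf_joins negb_forall.
apply/existsP/existsP => [[j]|[j /and3P[a b c]]].
  by rewrite negb_imply => /andP[/andP[a b] c]; exists j; rewrite a b c.
by exists j; rewrite negb_imply a b c.
Qed.

Definition JQ := {j : S | join_irr j}.

Definition B : nfa Sigma {j : S | join_irr j} := Nfa (fun j : JQ => (val j <= f L)%O)
  (fun (j : JQ) a (j' : JQ) => (val j' <= rho [:: a] (val j))%O) (fun j : JQ => ~~ nf (val j)).

Lemma B_run w : forall X : {set {j : S | join_irr j}},
  [exists q in foldl (nfa_step B) X w, nfa_final B q] =
  [exists q in X, ~~ nf (rho w (val q))].
Proof.
case: hrep => _ rho0 rhoc.
elim: w => [|a w IH] X /=.
  by apply: eq_existsb => q; rewrite rho0.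
rewrite IH; apply/existsP/existsP => [[q' /andP[]]|[q /andP[qX]]].
  rewrite inE => /existsP[q /andP[qX tq]] h; exists q; rewrite qX /=.
  rewrite -cat1s rhoc fin_decomp; apply/existsP; exists (val q').
  by rewrite (valP q') h andbT; exact: tq.
rewrite -cat1s rhoc fin_decomp => /existsP[j /and3P[ji jl h]].
exists (exist _ j ji); rewrite h andbT inE; apply/existsP; exists q; by rewrite qX.
Qed.

Lemma B_accept : nfa_accept B =1 L.
Proof.
move=> w; rewrite /nfa_accept B_run.
have : ~~ nf (rho w (f L)) = L w.
  rewrite -feq; last exact: inLQ_L. rewrite nf_f; last exact: inLQ_q. by rewrite /lquot cats0; case: (L w).
move <-; rewrite fin_decomp; apply/existsP/existsP => [[q /andP[]]|[j /and3P[ji jl h]]].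
  by rewrite inE => ql h; exists (val q); rewrite (valP q) h andbT; exact: ql.
by exists (exist _ j ji); rewrite inE h andbT; exact: jl.
Qed.

Lemma LB_deg n : is_ns L n -> n <= degree S.
Proof.
case=> _ /(_ _ B B_accept); rewrite /degree card_sig => h.
by apply: leq_trans h _; rewrite cardsE.
Qed.
End LB.

Definition dfa2nfa (Sigma Q : finType) (D : dfa Sigma Q) : nfa Sigma Q :=
  Nfa (pred1 (dfa_init D)) (fun q a q' => dfa_trans D q a == q') (dfa_final D).

Lemma dfa2nfa_ok (Sigma Q : finType) (D : dfa Sigma Q) : nfa_accept (dfa2nfa D) =1 dfa_accept D.
Proof.
have H : forall w q, foldl (nfa_step (dfa2nfa D)) [set q] w = [set foldl (dfa_trans D) q w].
  elim=> [|a w IH] q //=; rewrite -IH; congr foldl; apply/setP => q'; rewrite !inE.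
  apply/existsP/eqP => [[p /andP[/set1P -> /eqP]]|->] //.
  by exists q; rewrite set11 /=.
move=> w; rewrite /nfa_accept /dfa_accept.
have -> : [set q | nfa_init (dfa2nfa D) q] = [set dfa_init D] by apply/setP => q; rewrite !inE.
rewrite H; apply/existsP/idP => [[q /andP[/set1P -> //]]|h].
by exists (foldl (dfa_trans D) (dfa_init D) w); rewrite set11.
Qed.

Theorem theorem4p6 (Sigma : finType) (L : lang Sigma) :
  regular L -> exists n : nat, is_ns L n /\ is_min_ext_degree L n.
Proof.
case=> Q0 [D hD].
pose P n := pb (exists (Q : finType) (A : nfa Sigma Q), nfa_accept A =1 L /\ #|Q| = n).
have exP : exists n, P n.
  exists #|Q0|; apply/pbP; exists Q0, (dfa2nfa D); split => // w.
  by rewrite dfa2nfa_ok hD.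
case: (ex_minnP exP) => n /pbP [Q [A [hA hQ]]] hmin.
have ns : is_ns L n.
  split; first by exists Q, A.
  by move=> Q' A' h; apply: hmin; apply/pbP; exists Q', A'.
exists n; split => //; split.
  exists (cs_display), (CS A), (@rho _ _ A); split.
  - exact: rho_rep.
  - exact: fK_ext hA.
  - apply/eqP; rewrite eqn_leq; apply/andP; split; first by rewrite -hQ; exact: degree_CS.
    case: (fK_ext hA) => f [h1 h2 h3 h4].
    exact: (LB_deg (@rho_rep _ _ A) h1 h2 h3 h4 ns).
move=> d S r hr [f [h1 h2 h3 h4]].
exact: (LB_deg hr h1 h2 h3 h4 ns).
Qed.
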